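(* Let $p\ge3$. Let $m,s,n,j$ be integers and $E$ a real number. If $0\le m<n$, $0\le s<n$, $1<E$, and $|j|>p^{En}$, then $l_\Gamma(t^{-m}a^jt^s)>(E-1)n$.
   Context: $G=BS(1,p)=\langle a,t\mid tat^{-1}=a^p\rangle$ with generating set $\{a^{\pm1},t^{\pm1}\}$; for a word $v$, $l_\Gamma(v)$ denotes the word length (length of a geodesic representative in the Cayley graph) of the element of $G$ represented by $v$. *)

(* Defs.v *)
From Stdlib Require Import Reals ZArith.
From mathcomp Require Import all_boot.
From mathcomp Require Import boolp.

Set Implicit Arguments.
Unset Strict Implicit.
Unset Printing Implicit Defensive.

Inductive gen := A | Ai | T | Ti.

Definition ginv (x : gen) : gen :=
  match x with A => Ai | Ai => A | T => Ti | Ti => T end.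

Definition word := seq gen.

(* Two words represent the same element of BS(1,p): the congruence on words
   generated by free cancellation x x^-1 = 1 and the defining relation
   t a t^-1 = a^p, applied inside arbitrary contexts. *)
Inductive weq (p : nat) : word -> word -> Prop :=
| weq_refl u : weq p u u
| weq_sym u v : weq p u v -> weq p v u
| weq_trans u v w : weq p u v -> weq p v w -> weq p u w
| weq_cancel u w x : weq p (u ++ [:: x; ginv x] ++ w) (u ++ w)
| weq_rel u w : weq p (u ++ [:: T; A; Ti] ++ w) (u ++ nseq p A ++ w).

Lemma wl_exists (p : nat) (v : word) :
  exists n, `[< exists w, weq p w v /\ size w = n >].
Proof. exists (size v); apply/asboolP; exists v; split => //; exact: weq_refl. Qed.

Definition word_length (p : nat) (v : word) : nat := ex_minn (wl_exists p v).

Definition apow (j : Z) : word :=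
  if (0 <=? j)%Z then nseq (Z.to_nat j) A else nseq (Z.to_nat (- j)) Ai.

Definition tpow (k : nat) : word := nseq k T.
Definition tinvpow (k : nat) : word := nseq k Ti.

(* Main.v *)
Require Import Defs.
From Stdlib Require Import Reals ZArith Lra Lia.
From mathcomp Require Import all_boot.
From mathcomp Require Import boolp.

Open Scope R_scope.

Definition act (P : R) (x : gen) (y : R) : R :=
  match x with A => y + 1 | Ai => y - 1 | T => P * y | Ti => y / P end.

Fixpoint F (P : R) (w : word) (y : R) : R :=
  match w with [::] => y | x :: w' => act P x (F P w' y) end.

Lemma F_cat P u v y : F P (u ++ v) y = F P u (F P v y).
Proof. elim: u => [|x u IH] //=; by rewrite IH. Qed.

Lemma F_nseqA P k y : F P (nseq k A) y = y + INR k.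
Proof.
elim: k => [|k IH]; first (simpl; ring).
rewrite S_INR -Rplus_assoc -IH /=; ring.
Qed.

Lemma F_weq (p : nat) u v : (0 < p)%N -> weq p u v ->
  forall y, F (INR p) u y = F (INR p) v y.
Proof.
move=> hp H; induction H as [u0|u0 v0 _ IH|u0 v0 w0 _ IH1 _ IH2|u0 w0 x|u0 w0] => y.
- by [].
- by rewrite IH.
- by rewrite IH1 IH2.
- rewrite !F_cat /=.
  have hP : INR p <> 0 by apply: not_0_INR; move/ltP: hp; lia.
  case: x => /=; try (f_equal; field; assumption).
- rewrite !F_cat /= F_nseqA.
  have hP : INR p <> 0 by apply: not_0_INR; move/ltP: hp; lia.
  f_equal; field; assumption.
Qed.

Lemma F_bound P w : 2 <= P -> Rabs (F P w 0) <= P ^ (size w).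
Proof.
move=> hP; elim: w => [|x w IH] /=.
- rewrite Rabs_R0; lra.
- have h1 : 1 <= P ^ size w by apply: pow_R1_Rle; lra.
  case: x => /=.
  + apply: Rle_trans (Rabs_triang _ _) _; rewrite Rabs_R1; nra.
  + apply: Rle_trans (Rabs_triang _ _) _; rewrite Rabs_Ropp Rabs_R1; nra.
  + rewrite Rabs_mult (Rabs_right P); [|lra]. nra.
  + rewrite /Rdiv Rabs_mult Rabs_inv (Rabs_right P); [|lra].
    have hF := Rabs_pos (F P w 0).
    have hi : 0 < / P by apply: Rinv_0_lt_compat; lra.
    have hi2 : / P <= 1 by rewrite -Rinv_1; apply: Rinv_le_contravar; lra.
    nra.
Qed.

Lemma F_tpow P k : F P (tpow k) 0 = 0.
Proof. elim: k => [|k IH] //=; rewrite IH; ring. Qed.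

Lemma F_apow P j y : F P (apow j) y = y + IZR j.
Proof.
rewrite /apow; case: (Z.leb_spec0 0 j) => hj.
- rewrite F_nseqA INR_IZR_INZ Z2Nat.id //.
- have hn : (0 <= - j)%Z by lia.
  have -> : forall k z, F P (nseq k Ai) z = z - INR k.
    move=> k z; elim: k => [|k IH]; first (simpl; ring).
    rewrite S_INR /= IH; ring.
  rewrite INR_IZR_INZ Z2Nat.id // opp_IZR; ring.
Qed.

Lemma F_tinvpow P k y : P <> 0 -> F P (tinvpow k) y = y / P ^ k.
Proof.
move=> hP; elim: k => [|k IH] /=; first field.
rewrite IH; have := pow_nonzero P k hP => h; field; auto.
Qed.

Theorem lemma6p4 (p : nat) (m s n : nat) (j : Z) (E : R) :
  (3 <= p)%N -> (m < n)%N -> (s < n)%N -> Rlt 1 E ->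
  Rlt (Rpower (INR p) (Rmult E (INR n))) (IZR (Z.abs j)) ->
  Rlt (Rmult (Rminus E 1) (INR n))
      (INR (word_length p (tinvpow m ++ apow j ++ tpow s))).
Proof.
move=> hp hmn hsn hE hj.
rewrite /word_length; case: ex_minnP => L /asboolP [w [Hw Hs]] _.
have hp0 : (0 < p)%N by apply: leq_trans hp.
have hP3 : 3 <= INR p by (have := le_INR 3 p ltac:(move/leP: hp; lia)); simpl; lra.
have hP0 : INR p <> 0 by lra.
have Hb := @F_bound (INR p) w (ltac:(lra) : 2 <= INR p).
rewrite (@F_weq p _ _ hp0 Hw 0) !F_cat F_tpow F_apow F_tinvpow // Hs in Hb.
have hpm : 0 < INR p ^ m by apply: pow_lt; lra.
have hJ : IZR (Z.abs j) <= INR p ^ (L + m).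
  rewrite abs_IZR pow_add.
  rewrite /Rdiv Rplus_0_l Rabs_mult Rabs_inv (Rabs_right (INR p ^ m)) in Hb; [|lra].
  have := Rmult_le_compat_r (INR p ^ m) _ _ (Rlt_le _ _ hpm) Hb.
  by rewrite Rmult_assoc Rinv_l; [rewrite Rmult_1_r|lra].
destruct (Rlt_le_dec ((E - 1) * INR n) (INR L)) as [h|h]; first exact h.
exfalso.
have hm1 : INR m + 1 <= INR n.
  rewrite -S_INR; apply: le_INR; move/ltP: hmn; lia.
have hLm : INR (L + m) <= E * INR n by rewrite plus_INR; nra.
have := Rle_Rpower (INR p) _ _ (ltac:(lra)) hLm.
rewrite Rpower_pow; [|lra].
lra.
Qed.
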